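(* Let $X=(X_1,\dots,X_d)$ be a random vector in $\mathbb{R}^d$ with finite support $\mathcal{X}:=\{x\in\mathbb{R}^d : \mathbb{P}(X=x)>0\}$, and assume there exist non-empty subsets $\mathcal{X}_1,\dots,\mathcal{X}_d\subset\mathbb{R}$ such that $\mathcal{X}=\mathcal{X}_1\times\cdots\times\mathcal{X}_d$. Then there exist measures $\nu_1,\dots,\nu_d$ on $(\mathbb{R},\mathcal{B}(\mathbb{R}))$ such that the law $\mathbf{P}_X$ of $X$ is absolutely continuous with respect to $\nu:=\nu_1\otimes\cdots\otimes\nu_d$, and, denoting by $f$ the density of $X$ with respect to $\nu$ and, for every $A\subseteq\{1,\dots,d\}$, by $f_A$ the density of $X_A:=(X_i)_{i\in A}$ with respect to $\nu_A:=\bigotimes_{i\in A}\nu_i$, there exists $M\in(0,1]$ such that for every $A\subseteq\{1,\dots,d\}$ one has $f(x)\ge M\, f_A(x_A)\, f_{A^c}(x_{A^c})$ for $\nu$-almost every $x$.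
   Context: $\mathcal{B}(\mathbb{R})$ is the Borel $\sigma$-algebra; $A^c=\{1,\dots,d\}\setminus A$. For $A=\emptyset$ the density $f_\emptyset$ is taken to be the constant $1$. *)

(* Defs.v *)
From HB Require Import structures.
From mathcomp Require Import all_boot all_order all_algebra.
From mathcomp Require Import all_classical all_reals all_analysis.
Set Implicit Arguments.
Unset Strict Implicit.
Unset Printing Implicit Defensive.
Import Order.TTheory GRing.Theory Num.Theory.
Local Open Scope classical_set_scope.
Local Open Scope ring_scope.

(* R^n is represented by n.-tuple R, equipped by mathcomp-analysis with the
   product sigma-algebra (generated by the coordinate maps); R carries its
   Borel sigma-algebra. *)

Definition law d0 d (Omega : measurableType d0) (T : measurableType d)
  (R : realType) (P : probability Omega R) (X : Omega -> T) : set T -> \bar R :=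
  fun B => P (X @^-1` B).

Definition atoms d0 d (Omega : measurableType d0) (T : measurableType d)
  (R : realType) (P : probability Omega R) (X : Omega -> T) : set T :=
  [set x | (0 < P (X @^-1` [set x]))%E].

Definition is_product_measure (R : realType) (n : nat)
  (nus : 'I_n -> {measure set R -> \bar R})
  (nu : {measure set (n.-tuple R) -> \bar R}) : Prop :=
  forall B : 'I_n -> set R, (forall i, measurable (B i)) ->
    nu [set x | forall i, B i (tnth x i)] = (\prod_(i < n) nus i (B i))%E.

Definition abs_continuous d (T : measurableType d) (R : realType)
  (mu : set T -> \bar R) (nu : {measure set T -> \bar R}) : Prop :=
  forall B, measurable B -> nu B = 0%E -> mu B = 0%E.

Definition is_density d (T : measurableType d) (R : realType)
  (mu : set T -> \bar R) (nu : {measure set T -> \bar R}) (f : T -> R) : Prop :=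
  [/\ measurable_fun setT f, (forall x, 0 <= f x) &
      forall B, measurable B -> mu B = (\int[nu]_(x in B) (f x)%:E)%E].

(* x_A := (x_i)_{i in A}, coordinates listed in increasing order of i. *)
Definition coord_proj (R : realType) (n : nat) (A : {set 'I_n}) (x : n.-tuple R)
  : #|A|.-tuple R :=
  [tuple tnth x (enum_val k) | k < #|A|].

(* Main.v *)
Require Import Defs.
From HB Require Import structures.
From mathcomp Require Import all_boot all_order all_algebra.
From mathcomp Require Import all_classical all_reals all_analysis.
Import Order.TTheory GRing.Theory Num.Theory.
Local Open Scope classical_set_scope.
Local Open Scope ring_scope.

Lemma rect_meas (R : realType) (n : nat) (B : 'I_n -> set R) :
  (forall i, measurable (B i)) ->
  measurable [set x : n.-tuple R | forall i, B i (tnth x i)].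
Proof.
move=> mB.
have -> : [set x : n.-tuple R | forall i, B i (tnth x i)] =
  \bigcap_(i in [set: 'I_n]) ((fun x : n.-tuple R => tnth x i) @^-1` B i).
  apply/seteqP; split => x /= H i; first by move=> _; exact: H.
  exact: H.
apply: fin_bigcap_measurable; first exact: finite_finset.
move=> i _; rewrite -[X in measurable X]setTI.
exact: (measurable_tnth i measurableT (mB i)).
Qed.

Lemma set1_rect (R : realType) (n : nat) (a : n.-tuple R) :
  [set a] = [set x : n.-tuple R | forall i, [set tnth a i] (tnth x i)].
Proof.
apply/seteqP; split => x /=.
  by move=> -> i.
by move=> H; apply: eq_from_tnth => i; apply: H.
Qed.

Lemma dens1 d (T : measurableType d) (R : realType)
  (mu : set T -> \bar R) (nu : {measure set T -> \bar R}) (f : T -> R) (a : T) :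
  is_density mu nu f -> measurable [set a] -> nu [set a] = 1%E ->
  (f a)%:E = mu [set a].
Proof.
case=> _ _ h ma nu1; rewrite h //.
rewrite (eq_integral (cst (f a)%:E)); last first.
  by move=> x; rewrite inE => ->.
by rewrite integral_cst // nu1 mule1.
Qed.

Lemma lower_bound_seq (R : realType) (T : eqType) (A : set T) (g : T -> R)
  (s : seq T) : (forall x, A x -> 0 < g x) ->
  exists m : R, 0 < m <= 1 /\ forall x, x \in s -> A x -> m <= g x.
Proof.
move=> gp; elim: s => [|y s [m [/andP[m0 m1] Hm]]].
  by exists 1; split => //; rewrite ltr01 lexx.
case: (pselect (A y)) => Ay.
  exists (Order.min m (g y)); split.
    by rewrite lt_min m0 gp //= ge_min m1.
  move=> x; rewrite inE => /orP[/eqP -> _|xs Ax]; first by rewrite ge_min lexx orbT.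
  by rewrite ge_min Hm.
exists m; split; first by rewrite m0 m1.
move=> x; rewrite inE => /orP[/eqP -> //|xs Ax]; exact: Hm.
Qed.

Lemma lower_bound (R : realType) (T : choiceType) (A : set T) (g : T -> R) :
  finite_set A -> (forall x, A x -> 0 < g x) ->
  exists m : R, 0 < m <= 1 /\ forall x, A x -> m <= g x.
Proof.
move=> fA gp; have [m [m01 Hm]] := @lower_bound_seq R T A g (finmap.enum_fset (fset_set A)) gp.
exists m; split => // x Ax; apply: Hm => //.
by rewrite in_fset_set // mem_set.
Qed.

Lemma mset1t (R : realType) (n : nat) (a : n.-tuple R) : measurable [set a].
Proof. rewrite set1_rect; apply: (@rect_meas R n (fun i => [set tnth a i])) => i /=.
exact: measurable_set1. Qed.

Arguments dens1 {d T R mu nu f a}.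
Arguments mset1t {R n}.
Arguments set1_rect {R n}.
Arguments rect_meas {R n}.
Theorem corollary1 (R : realType) (d : nat) (d0 : measure_display)
  (Omega : measurableType d0) (P : probability Omega R)
  (X : Omega -> d.-tuple R) (mX : measurable_fun setT X) :
  finite_set (atoms P X) ->
  P (X @^-1` atoms P X) = 1%E ->
  (exists Xs : 'I_d -> set R, (forall i, Xs i !=set0) /\
     atoms P X = [set x | forall i, Xs i (tnth x i)]) ->
  exists nus : 'I_d -> {measure set R -> \bar R},
    (forall i, sigma_finite setT (nus i)) /\
    forall nu : {measure set (d.-tuple R) -> \bar R},
      is_product_measure nus nu ->
      abs_continuous (law P X) nu /\
      exists M : R, 0 < M <= 1 /\
        forall nuA : forall A : {set 'I_d}, {measure set (#|A|.-tuple R) -> \bar R},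
          (forall A, is_product_measure (fun k => nus (enum_val k)) (nuA A)) ->
        forall f : d.-tuple R -> R, is_density (law P X) nu f ->
        forall fA : forall A : {set 'I_d}, #|A|.-tuple R -> R,
          (forall A, is_density (law P (fun w => coord_proj A (X w))) (nuA A) (fA A)) ->
        forall A : {set 'I_d},
          {ae nu, forall x, M * fA A (coord_proj A x) * fA (~: A) (coord_proj (~: A) x) <= f x}.
Proof.
move=> finA PA1 [Xs [Xsne HXs]].
have [g Hg] : exists g : 'I_d -> R, forall j, Xs j (g j).
  by apply: fin_all_exists => j; case: (Xsne j) => r ?; exists r.
have Xsfin i : finite_set (Xs i).
  apply: (@sub_finite_set _ _ [set tnth x i | x in atoms P X]); last exact: finite_image.
  move=> r0 Xr; exists [tuple if j == i then r0 else g j | j < d].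
    by rewrite HXs => j /=; rewrite tnth_mktuple; case: eqP => [->|].
  by rewrite tnth_mktuple eqxx.
have mXs i : measurable (Xs i).
  by apply: countable_measurable; [exact: measurable_set1|exact: finite_set_countable].
exists (fun i => mrestr (@counting R R) (mXs i)).
have nus1 i r : Xs i r -> mrestr (@counting R R) (mXs i) [set r] = 1%E.
  move=> Xr; rewrite /mrestr setIidl; last by move=> x ->.
  by rewrite /counting asboolT ?finite_set1 // fset_set1 finmap.cardfs1.
have nusfin i A : mrestr (@counting R R) (mXs i) A = (fine (mrestr (@counting R R) (mXs i) A))%:E.
  rewrite /mrestr /counting asboolT //; exact: (sub_finite_set (@subIsetr _ _ _) (Xsfin i)).
split.
  move=> i; apply: fin_num_fun_sigma_finite; first by rewrite measure0 ltry.
  by move=> A mA /=; rewrite nusfin.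
move=> nu Hnu.
have nu1 a : atoms P X a -> nu [set a] = 1%E.
  move=> Aa; rewrite set1_rect (Hnu (fun i => [set tnth a i])); last by move=> i; exact: measurable_set1.
  rewrite big1 // => i _; apply: nus1; move: Aa; rewrite HXs; exact.
have matoms : measurable (atoms P X) by rewrite HXs; exact: rect_meas.
have null : nu (~` atoms P X) = 0%E.
  have hA : nu (atoms P X) = (\prod_(i < d) mrestr (@counting R R) (mXs i) (Xs i))%E.
    by rewrite HXs (Hnu Xs).
  have eqT : nu setT = nu (atoms P X).
    have -> : [set: d.-tuple R] = [set x | forall i, [set: R] (tnth x i)].
      by apply/seteqP; split.
    rewrite (Hnu (fun=> setT)) // hA.
    by apply: eq_bigr => i _ /=; rewrite /mrestr setTI setIid.
  have finnu : nu (atoms P X) = (fine (nu (atoms P X)))%:E.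
    rewrite hA; under eq_bigr do rewrite nusfin.
    by rewrite prodEFin.
  have := measureU nu matoms (measurableC matoms) (setICr _).
  rewrite setUv => HU.
  have : (nu (atoms P X) + nu (~` atoms P X) = nu (atoms P X))%E.
    by rewrite -HU; exact: eqT.
  rewrite finnu; clear HU.
  have : (0 <= nu (~` atoms P X))%E by exact: measure_ge0.
  case: (nu (~` atoms P X)) => [s| |] //= s0.
  by move/eqP; rewrite -EFinD eqe -subr_eq0 addrAC subrr add0r => /eqP ->.
have mpre S : measurable S -> measurable (X @^-1` S).
  by move=> mS; rewrite -[X in measurable X]setTI; exact: mX.
have Pnull : P (X @^-1` (~` atoms P X)) = 0%E.
  rewrite preimage_setC probability_setC; last exact: (mpre _ matoms).
  by rewrite PA1 subee.
split.
  move=> B mB nuB0; rewrite /law; apply/eqP; rewrite eq_le measure_ge0 andbT.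
  rewrite -Pnull; apply: le_measure; rewrite ?inE.
  - exact: mpre.
  - exact: (mpre _ (measurableC matoms)).
  move=> w /= XB XA; have := nu1 _ XA.
  have : (nu [set X w] <= nu B)%E.
    apply: le_measure; rewrite ?inE //; last by move=> y ->.
    exact: mset1t.
  by rewrite nuB0 => /[swap] -> ; rewrite lee_fin ler10.
have gpos : forall x, atoms P X x -> 0 < fine (P (X @^-1` [set x])).
  move=> x Ax; apply: fine_gt0; rewrite Ax /=.
  by rewrite (le_lt_trans (probability_le1 _ (mpre _ (mset1t x)))) ?ltry.
have [M [/andP[M0 M1] HM]] := @lower_bound R (d.-tuple R) (atoms P X)
  (fun x => fine (P (X @^-1` [set x]))) finA gpos.
exists M; split; first by rewrite M0 M1.
move=> nuA HnuA f Hf fA HfA A.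
have fAb A' x : atoms P X x -> 0 <= fA A' (coord_proj A' x) <= 1.
  move=> Ax; have [_ fA0 _] := HfA A'; rewrite fA0 /=.
  have nuA1 : nuA A' [set coord_proj A' x] = 1%E.
    rewrite set1_rect (HnuA A' (fun k => [set tnth (coord_proj A' x) k])); last first.
      by move=> k; exact: measurable_set1.
    rewrite big1 // => k _; apply: nus1; rewrite tnth_mktuple; move: Ax; rewrite HXs; exact.
  rewrite -lee_fin (dens1 (HfA A') (mset1t _) nuA1) /law.
  apply: probability_le1.
  have mc : measurable_fun setT (@coord_proj R d A').
    apply/measurable_fun_tnthP => k.
    have -> : (fun t => tnth t k) \o @coord_proj R d A' = (fun t => tnth t (enum_val k)).
      by apply: funext => t /=; rewrite tnth_mktuple.
    exact: measurable_tnth.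
  rewrite -[X in measurable X]setTI.
  exact: (measurableT_comp mc mX measurableT (mset1t _)).
exists (~` atoms P X); split; [exact: measurableC matoms| exact: null|].
apply: subsetC => x Ax /=.
have fx : (f x)%:E = P (X @^-1` [set x]) := dens1 Hf (mset1t x) (nu1 x Ax).
have HMx : M <= f x by have := HM x Ax; rewrite -fx.
have /andP[a0 a1] := fAb A x Ax.
have /andP[c0 c1] := fAb (~: A) x Ax.
rewrite -mulrA; apply: le_trans HMx; rewrite -[leRHS]mulr1.
by rewrite ler_wpM2l ?(ltW M0) // mulr_ile1.
Qed.
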